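(* Let $T$ be a rooted binary tree with $n\ge 2$ leaves, let $T=(T_a,T_b)$ be its standard decomposition with $n_a\ge n_b$ leaves respectively, and let $k=\lceil\log_2 n\rceil$. Then $T$ has minimal Sackin index among trees with $n$ leaves if and only if $T_a$ and $T_b$ have minimal Sackin index among trees with $n_a$ and $n_b$ leaves respectively and $n_a-n_b\le\min\{n-2^{k-1},\,2^k-n\}$.
   Context: A rooted binary tree is either a single vertex (both root and leaf), or a finite tree with a distinguished root of degree 2 whose other non-leaf vertices have degree 3. The standard decomposition $T=(T_a,T_b)$ lists the subtrees rooted at the two children of the root. The Sackin index is $\mathcal S(T)=\sum_{x\text{ leaf}}\delta_x$, with $\delta_x$ the number of edges from the root to $x$. *)

(* Defs.v *)
From mathcomp Require Import all_boot.
Set Implicit Arguments. Unset Strict Implicit. Unset Printing Implicit Defensive.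

(* Rooted binary trees (ordered; the Sackin index and leaf count are
   invariant under swapping children). Node a b has standard decomposition (a,b). *)
Inductive bintree : Type :=
| Leaf : bintree
| Node : bintree -> bintree -> bintree.

Fixpoint leaves (t : bintree) : nat :=
  match t with
  | Leaf => 1
  | Node a b => leaves a + leaves b
  end.

Fixpoint leaf_depths (t : bintree) : seq nat :=
  match t with
  | Leaf => [:: 0]
  | Node a b => map S (leaf_depths a ++ leaf_depths b)
  end.

Definition sackin (t : bintree) : nat := sumn (leaf_depths t).

Definition sackin_minimal (t : bintree) : Prop :=
  forall t' : bintree, leaves t' = leaves t -> sackin t <= sackin t'.

(* Main.v *)
Require Import Defs.
From mathcomp Require Import all_boot.
From mathcomp Require Import zify.

Fixpoint F (n : nat) : nat :=
  match n with
  | 0 => 0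
  | S m => match m with 0 => 0 | S _ => F m + (up_log 2 m.+1).+1 end
  end.

Lemma FS m : 1 <= m -> F m.+1 = F m + (up_log 2 m.+1).+1.
Proof. by case: m. Qed.

Lemma size_ld t : size (leaf_depths t) = leaves t.
Proof. by elim: t => //= a IHa b IHb; rewrite size_map size_cat IHa IHb. Qed.

Lemma sumn_mapS s : sumn (map S s) = sumn s + size s.
Proof. by elim: s => //= x s ->; rewrite addnS addSn addnA. Qed.

Lemma sackin_Node a b : sackin (Node a b) = sackin a + sackin b + leaves a + leaves b.
Proof.
by rewrite /sackin /= sumn_mapS sumn_cat size_cat !size_ld addnA.
Qed.

Lemma leaves_gt0 t : 0 < leaves t.
Proof. by elim: t => //= a Ha b Hb; rewrite addn_gt0 Ha. Qed.

Lemma balanced m : 1 <= m ->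
  F m + F m + m.*2 = F m.*2 /\ F m.+1 + F m + m.*2.+1 = F m.*2.+1.
Proof.
elim: m => // m IH _.
case: (posnP m) => [->|mpos]; first by split.
have [h1 h2] := IH mpos.
have e1 : up_log 2 (m.+1).*2 = (up_log 2 m.+1).+1 by rewrite up_log2_double.
have e2 : up_log 2 (m.+1).*2.+1 = (up_log 2 m.+2).+1.
  by rewrite up_log2S ?double_gt0 // doubleK.
have f1 : F (m.+1).*2 = F m.*2.+1 + (up_log 2 (m.+1).*2).+1.
  by rewrite doubleS FS.
have f2 : F (m.+1).*2.+1 = F (m.+1).*2 + (up_log 2 (m.+1).*2.+1).+1.
  by rewrite FS // doubleS.
have f3 : F m.+1 = F m + (up_log 2 m.+1).+1 by rewrite FS.
have f4 : F m.+2 = F m.+1 + (up_log 2 m.+2).+1 by rewrite FS.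
split.
- rewrite f1 -h2 e1 f3 doubleS; lia.
- rewrite f2 f1 -h2 e1 e2 f3 f4 !doubleS; lia.
Qed.

Arguments balanced {m}.

Lemma split_ok d : forall j, 1 <= j ->
  F (j + d) + F j + (j + d + j) >= F (j + d + j) /\
  (F (j + d) + F j + (j + d + j) = F (j + d + j) <->
   (d <= 1 \/ up_log 2 (j + d) = up_log 2 j.+1)).
Proof.
elim/ltn_ind: d => d IH j j1.
case: d IH => [|[|d]] IH.
- have [h _] := balanced j1. rewrite !addn0 addnn -h; split=> //; split=> // _; by left.
- have [_ h] := balanced j1.
  have e : j + 1 + j = j.*2.+1 by rewrite -addnn addn1 addSn.
  rewrite e addn1 -h; split=> //. split=> // _; by left.
have [H1 H2] := IH d (ltnW (ltnSn _)) j.+1 (leqW j1).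
have ee : j.+1 + d + j.+1 = j + d.+2 + j by lia.
have e3 : j.+1 + d = (j + d).+1 by lia.
rewrite ee e3 in H1 H2.
have fa : F (j + d.+2) = F (j+d).+1 + (up_log 2 (j + d.+2)).+1.
  by rewrite (_ : j + d.+2 = (j+d).+2) ?FS //; lia.
have fb : F j.+1 = F j + (up_log 2 j.+1).+1 by rewrite FS.
have m1 : up_log 2 j.+1 <= up_log 2 (j + d).+2.
  by apply: leq_up_log; lia.
have m2 : up_log 2 j.+1 <= up_log 2 j.+2 by apply: leq_up_log.
have m4 : up_log 2 (j+d).+1 <= up_log 2 (j+d).+2 by apply: leq_up_log.
have ed : (j + d).+2 = j + d.+2 by lia.
rewrite ed in m1 m4.
rewrite fb in H1 H2. rewrite fa.
split; first lia.
split.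
- move=> E; right.
  have : F (j + d).+1 + (F j + (up_log 2 j.+1).+1) + (j + d.+2 + j) =
         F (j + d.+2 + j) by lia.
  move/H2 => _. lia.
- case=> [//|E]. apply/eqP; rewrite eqn_leq; apply/andP; split; last by lia.
  suff <- : F (j + d).+1 + (F j + (up_log 2 j.+1).+1) + (j + d.+2 + j) =
         F (j + d.+2 + j) by lia.
  apply/H2; case: (leqP d 1) => hd; [by left | right].
  have m3 : up_log 2 j.+2 <= up_log 2 (j+d).+1 by apply: leq_up_log; lia.
  have m5 : up_log 2 (j+d).+1 <= up_log 2 (j + d.+2) by apply: leq_up_log; lia.
  lia.
Qed.

Lemma Fsub x y : 1 <= y -> y <= x -> F (x + y) <= F x + F y + (x + y).
Proof.
move=> y1 yx.
have [H _] := split_ok (x - y) y y1.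
have e : y + (x - y) = x by lia.
rewrite e in H. exact: H.
Qed.

Lemma lower t : F (leaves t) <= sackin t.
Proof.
elim: t => //= a Ha b Hb.
rewrite sackin_Node.
case: (leqP (leaves b) (leaves a)) => h.
- have := @Fsub _ _ (leaves_gt0 b) h; lia.
- have := @Fsub _ _ (leaves_gt0 a) (ltnW h); rewrite (addnC (leaves b)); lia.
Qed.

Lemma exists_tree n : 1 <= n -> exists t, leaves t = n /\ sackin t = F n.
Proof.
elim/ltn_ind: n => n IH n1.
case: (leqP n 1) => n2.
  have -> : n = 1 by lia.
  by exists Leaf.
have m1 : 1 <= n./2 by rewrite -divn2; lia.
have h1 : n./2 < n by rewrite -divn2; lia.
have [ta [la sa]] := IH n./2 h1 m1.
case: (boolP (odd n)) => od.
- have h2 : n./2.+1 < n.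
    by rewrite -[X in _ < X](odd_double_half n) od -addnn; lia.
  have [tb [lb sb]] := IH n./2.+1 h2 isT.
  exists (Node tb ta); rewrite /= lb la sackin_Node la lb sa sb.
  have [_ h] := balanced m1.
  have e : (n./2).*2.+1 = n by rewrite -[in RHS](odd_double_half n) od.
  rewrite e in h; split; [rewrite -e -addnn; lia | lia].
- exists (Node ta ta); rewrite /= la sackin_Node la sa.
  have [h _] := balanced m1.
  have e : (n./2).*2 = n by rewrite -[in RHS](odd_double_half n) (negbTE od).
  rewrite e in h; split; [rewrite -e -addnn; lia | lia].
Qed.

Lemma minimal_iff t : sackin_minimal t <-> sackin t = F (leaves t).
Proof.
split.
- move=> M. have [t' [l s]] := @exists_tree _ (leaves_gt0 t).
  have := M t' l; have := lower t; lia.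
- move=> E t' l; rewrite E -l; exact: lower.
Qed.

Lemma cond_equiv na nb : 1 <= nb -> nb <= na ->
  let n := na + nb in let K := up_log 2 n in
  (na - nb <= 1 \/ up_log 2 na = up_log 2 nb.+1) <->
  na - nb <= minn (n - 2 ^ K.-1) (2 ^ K - n).
Proof.
move=> nb1 ab n K.
have KE : K = up_log 2 n by [].
have nE : n = na + nb by [].
clearbody K; clearbody n.
have n1 : 1 < n by lia.
have [] := andP (up_log_bounds (isT : 1 < 2) n1); rewrite -KE.
have K1 : 0 < K by rewrite KE up_log_gt0 n1.
case: K KE K1 => [//|r] KE _ /= hlo hhi.
rewrite expnS in hhi *.
split.
- case: (leqP (na - nb) 1) => hd.
  + move=> _. rewrite leq_min; apply/andP; split; first lia.
    case: (na - nb =P 1) => h; last lia.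
    have hn : n = (nb.*2).+1 by rewrite -addnn; lia.
    have : n != 2 * 2 ^ r.
      apply/negP => /eqP h2; have : odd n by rewrite hn /= odd_double.
      by rewrite h2 oddM.
    lia.
  + case=> // E.
    have p0 : 0 < up_log 2 nb.+1 by rewrite up_log_gt0; lia.
    have nb2 : 1 < nb.+1 by lia.
    have na2 : 1 < na by lia.
    have [] := andP (up_log_bounds (isT : 1 < 2) nb2).
    have [] := andP (up_log_bounds (isT : 1 < 2) na2).
    rewrite E.
    case: (up_log 2 nb.+1) p0 => [//|p] _ /= a1 a2 b1 b2.
    rewrite expnS in a2 b2.
    have Kp : up_log 2 n = p.+2.
      apply: up_log_eq => //; rewrite !expnS; apply/andP; split; lia.
    have rp : r = p.+1 by move: Kp; rewrite -KE; case.
    subst r. rewrite expnS in hlo hhi *.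
    rewrite leq_min; apply/andP; split; lia.
- move=> H. case: (leqP (na - nb) 1) => hd; [by left | right].
  move: H; rewrite leq_min => /andP [H1 H2].
  case: r KE hlo hhi H1 H2 => [|s] KE hlo hhi H1 H2; first by lia.
  rewrite expnS in hlo hhi H1 H2.
  have -> : up_log 2 na = s.+1.
    apply: up_log_eq => //; rewrite expnS; apply/andP; split; lia.
  apply/esym; apply: up_log_eq => //; rewrite expnS; apply/andP; split; lia.
Qed.

Theorem mainTheorem15 (a b : bintree) :
  leaves b <= leaves a ->
  let n := leaves (Node a b) in
  let k := up_log 2 n in
  (sackin_minimal (Node a b) <->
   [/\ sackin_minimal a, sackin_minimal b &
       leaves a - leaves b <= minn (n - 2 ^ k.-1) (2 ^ k - n)]).
Proof.
move=> ab n k.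
have H := @cond_equiv (leaves a) (leaves b) (leaves_gt0 b) ab.
rewrite /= in H.

have [L1 L2] := split_ok (leaves a - leaves b) (leaves b) (leaves_gt0 b).
have e : leaves b + (leaves a - leaves b) = leaves a by lia.
rewrite e in L1 L2.
have la := lower a; have lb := lower b.
split.
- move=> M; have E := proj1 (minimal_iff _) M; rewrite sackin_Node /= in E.
  have ea : sackin a = F (leaves a) by lia.
  have eb : sackin b = F (leaves b) by lia.
  split; [exact: (proj2 (minimal_iff _)) | exact: (proj2 (minimal_iff _)) | apply/H; apply/L2; lia].
- case=> Ma Mb /H /L2 E.
  have ea := proj1 (minimal_iff _) Ma; have eb := proj1 (minimal_iff _) Mb.
  apply: (proj2 (minimal_iff _)); rewrite sackin_Node /=; lia.
Qed.
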